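(* Let $K$ be a global function field with full constant field $\mathbb{F}_q$, and let $\phi\in K[X]$ be a polynomial of degree $d$. Let $\mathcal{P}$ and $\mathcal{P}'$ be subsets of $K$ such that: (a) the differences $y-x$, with $(x,y)$ ranging over the pairs of distinct elements of $\mathcal{P}$, are all equal up to multiplication by elements of $\mathbb{F}_q^*$ (i.e. for any two such pairs $(x,y),(x',y')$ there is $u\in\mathbb{F}_q^*$ with $y'-x'=u(y-x)$); (b) $\mathcal{P}'\cup\phi(\mathcal{P}')\subseteq\mathcal{P}$. Then: (i) $\#\mathcal{P}\leqslant q$ (this uses only (a)); (ii) either $\#\mathcal{P}'\leqslant d$, or $\phi$ is conjugate over $K$ to a polynomial with coefficients in $\mathbb{F}_q$.
   Context: A global function field is a finite extension of $\mathbb{F}_p(t)$; its full constant field is the algebraic closure of $\mathbb{F}_p$ in $K$, a finite field $\mathbb{F}_q$. ''$\phi$ is conjugate over $K$ to $\psi$'' means $\psi=\eta\circ\phi\circ\eta^{-1}$ for some invertible change of coordinates $\eta$ defined over $K$. *)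

(* Defs.v *)
From HB Require Import structures.
From mathcomp Require Import all_boot all_order all_algebra all_field.
From mathcomp Require Import fraction.
Set Implicit Arguments. Unset Strict Implicit. Unset Printing Implicit Defensive.
Import Order.TTheory GRing.Theory Num.Theory.
Local Open Scope ring_scope.

Definition Fpt (p : nat) := {fraction {poly 'F_p}}.

(* x is algebraic over the prime field F_p of K (char K = p): it is a root of a
   nonzero polynomial with coefficients in F_p (mapped into K via n |-> n%:R). *)
Definition is_const (p : nat) (K : fieldType) (x : K) : Prop :=
  exists P : {poly 'F_p}, P != 0 /\
    root (map_poly (fun a : 'F_p => (nat_of_ord a)%:R : K) P) x.

(* #P <= n for a possibly infinite subset P of K. *)
Definition card_le (K : eqType) (P : K -> Prop) (n : nat) : Prop :=
  forall s : seq K, uniq s -> (forall x, x \in s -> P x) -> (size s <= n)%N.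

Definition conj_to_const_poly (p : nat) (K : fieldType) (phi : {poly K}) : Prop :=
  exists a b : K, a != 0 /\
    let eta := a *: 'X + b%:P in
    let etainv := a^-1 *: ('X - b%:P) in
    let psi := eta \Po (phi \Po etainv) in
    forall i : nat, is_const p psi`_i.

(* Main.v *)
From HB Require Import structures.
From mathcomp Require Import all_boot all_order all_algebra all_field.
From mathcomp Require Import fraction.
Require Import Defs.
From Stdlib Require Import Classical.
From mathcomp Require Import ring zify.
Import GRing.Theory.
Local Open Scope ring_scope.
Set Implicit Arguments. Unset Strict Implicit.

Section Frob.
Variables (F : fieldType) (p : nat) (hp : p \in [pchar F]).

Definition frob (M : nat) (x : F) := x ^+ (p ^ M).

Lemma pnat_pM M : [pchar F].-nat (p ^ M)%N.
Proof. by rewrite pnatX (eq_pnat _ (pcharf_eq hp)) pnat_id ?(pcharf_prime hp). Qed.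

Lemma frob_nmod M : nmod_morphism (frob M).
Proof.
split; rewrite /frob; first by rewrite expr0n expn_eq0 (gtn_eqF (prime_gt0 (pcharf_prime hp))).
by move=> x y; rewrite exprDn_pchar // pnat_pM.
Qed.

Lemma frob_monoid M : monoid_morphism (frob M).
Proof. by split; rewrite /frob ?expr1n // => x y; rewrite exprMn. Qed.

HB.instance Definition _ M := GRing.isNmodMorphism.Build F F (frob M) (frob_nmod M).
HB.instance Definition _ M := GRing.isMonoidMorphism.Build F F (frob M) (frob_monoid M).

Lemma frob_comp i j x : frob i (frob j x) = frob (j + i) x.
Proof. by rewrite /frob -exprM expnD. Qed.

Lemma frob_inj M : injective (frob M).
Proof. exact: fmorph_inj. Qed.

Lemma frob_nat M n : frob M n%:R = n%:R.
Proof. exact: rmorph_nat. Qed.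

Lemma frob_mul M k x : frob M x = x -> frob (M * k) x = x.
Proof.
move=> h; elim: k => [|k IH]; first by rewrite muln0 /frob expn0 expr1.
by rewrite mulnS -frob_comp h IH.
Qed.

Definition fp2 (a : 'F_p) : F := (nat_of_ord a)%:R.

Lemma Fp_natv (a : 'F_p) : a = (nat_of_ord a)%:R.
Proof.
have pp := pcharf_prime hp.
apply: val_inj => /=; rewrite val_Fp_nat // modn_small //.
by have := ltn_ord a; move: (nat_of_ord a) => n; rewrite Fp_cast.
Qed.

Lemma fp2_nat n : fp2 n%:R = n%:R.
Proof. by rewrite /fp2 val_Fp_nat ?(pcharf_prime hp) // (GRing.natr_mod_pchar hp). Qed.

Lemma fp2_nmod : nmod_morphism fp2.
Proof.
split; first exact: (fp2_nat 0).
move=> a b; have -> : a + b = (nat_of_ord a + nat_of_ord b)%:R by rewrite natrD -!Fp_natv.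
by rewrite fp2_nat natrD.
Qed.

Lemma fp2_monoid : monoid_morphism fp2.
Proof.
split; first exact: (fp2_nat 1).
move=> a b; have -> : a * b = (nat_of_ord a * nat_of_ord b)%:R by rewrite natrM -!Fp_natv.
by rewrite fp2_nat natrM.
Qed.

HB.instance Definition _ := GRing.isNmodMorphism.Build 'F_p F fp2 fp2_nmod.
HB.instance Definition _ := GRing.isMonoidMorphism.Build 'F_p F fp2 fp2_monoid.

Lemma const_fix x : is_const p x -> exists2 M, (0 < M)%N & frob M x = x.
Proof.
case=> P [P0 rootP].
pose Q := map_poly fp2 P.
have rQ : Q.[x] = 0 by apply/eqP; exact: rootP.
have Q0 : Q != 0 by rewrite map_poly_eq0.
pose rs := mkseq (fun k => frob k x) (size Q).
have allr : all (root Q) rs.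
  apply/allP => y; rewrite /rs /mkseq => /mapP [k _ ->]; rewrite /root.
  have <- : map_poly (frob k) Q = Q.
    by apply/polyP => i; rewrite coef_map /= coef_map /= /fp2 frob_nat.
  by rewrite horner_map rQ rmorph0.
case: (boolP (uniq rs)) => [u | /(uniqPn 0) [i [j [ij jr e]]]].
  by have := max_poly_roots Q0 allr u; rewrite size_mkseq ltnn.
rewrite size_mkseq in jr.
rewrite !nth_mkseq ?(ltn_trans ij) // in e.
exists (j - i)%N; first by rewrite subn_gt0.
apply: (@frob_inj i); rewrite frob_comp e subnK // ltnW //.
Qed.

Lemma fix_const M x : (0 < M)%N -> frob M x = x -> is_const p x.
Proof.
move=> M0 h; have pp := pcharf_prime hp.
have n1 : (1 < p ^ M)%N by rewrite -{1}(expn0 p) ltn_exp2l ?prime_gt1.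
exists ('X^(p ^ M) - 'X); split.
  rewrite -size_poly_eq0 size_polyDl ?size_polyXn // size_polyN size_polyX.
  by rewrite ltnS.
change (root (map_poly fp2 ('X^(p ^ M) - 'X)) x).
rewrite rmorphB /= map_polyXn map_polyX /root !hornerE.
by move: h; rewrite /frob => ->; rewrite subrr.
Qed.

End Frob.

Lemma charK (p : nat) (p_prime : prime p) (K : fieldExtType (Fpt p)) : p \in [pchar K].
Proof.
rewrite (pchar_lalg K); apply/andP; split => //.
have h : (p%:R : {poly 'F_p}) = 0 by rewrite -polyC_natr pchar_Fp_0.
by rewrite -tofrac1 -tofracMn h tofrac0.
Qed.

Lemma uniform_M (F : fieldType) (p : nat) (hp : p \in [pchar F]) (s : seq F) :
  (forall x, x \in s -> is_const p x) ->
  exists2 M, (0 < M)%N & forall x, x \in s -> frob p M x = x.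
Proof.
elim: s => [|y s IH] h; first by exists 1%N.
have [M1 M10 h1] := const_fix hp (h y (mem_head _ _)).
have [M2 M20 h2] := IH (fun x hx => h x (mem_behead (s:=y::s) hx)).
exists (M1 * M2)%N; first by rewrite muln_gt0 M10.
move=> x; rewrite inE => /orP [/eqP -> | hx]; first exact: frob_mul.
by rewrite mulnC; apply: frob_mul; apply: h2.
Qed.

Lemma const0 (F : fieldType) (p : nat) (hp : p \in [pchar F]) : is_const p (0 : F).
Proof. by apply: (@fix_const _ _ hp 1%N) => //; rewrite rmorph0. Qed.

Lemma ratio_const (F : fieldType) (p : nat) (hp : p \in [pchar F]) (P : F -> Prop)
  (ha : forall x y x' y' : F, P x -> P y -> x != y -> P x' -> P y' -> x' != y' ->
         exists u : F, is_const p u /\ u != 0 /\ y' - x' = u * (y - x))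
  x0 y0 z : P x0 -> P y0 -> x0 != y0 -> P z -> is_const p ((z - x0) / (y0 - x0)).
Proof.
move=> Px Py xy Pz; have [-> | zx] := eqVneq z x0; first by rewrite subrr mul0r; apply: const0.
have zx2 : x0 != z by rewrite eq_sym.
have [u [uc [_ e]]] := ha x0 y0 x0 z Px Py xy Px Pz zx2.
rewrite e mulfK //; by rewrite subr_eq0 eq_sym.
Qed.

Theorem proposition2p7 (p : nat) (p_prime : prime p)
  (K : fieldExtType (Fpt p))
  (Fq : seq K) (Fq_uniq : uniq Fq)
  (Fq_def : forall x : K, x \in Fq <-> is_const p x)
  (phi : {poly K}) (d : nat) (hd : (size phi).-1 = d)
  (P P' : K -> Prop)
  (ha : forall x y x' y' : K, P x -> P y -> x != y -> P x' -> P y' -> x' != y' ->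
         exists u : K, is_const p u /\ u != 0 /\ y' - x' = u * (y - x))
  (hb : forall x : K, P' x -> P x /\ P phi.[x]) :
  card_le P (size Fq) /\
  (card_le P' d \/ conj_to_const_poly p phi).
Proof.
have hp := charK p_prime K.
split.
  move=> [|x0 s] us sP //.
  case: s us sP => [|y0 s] us sP.
    by have /Fq_def := const0 hp; case: (Fq).
  have xy : x0 != y0 by move: us => /= /andP [] /negP h _; apply/eqP => e; apply: h; rewrite e mem_head.
  have d0 : y0 - x0 != 0 by rewrite subr_eq0 eq_sym.
  pose g z := (z - x0) / (y0 - x0).
  have ginj : injective g by move=> z1 z2 e; move: (mulIf (invr_neq0 d0) e) => /eqP; rewrite subr_eq addrNK => /eqP.
  rewrite -(size_map g); apply: uniq_leq_size; first by rewrite map_inj_uniq.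
  move=> t /mapP [z zs ->]; apply/Fq_def; apply: (ratio_const hp ha).
  - exact: sP (mem_head _ _).
  - by apply: sP; rewrite inE mem_head orbT.
  - exact: xy.
  - exact: sP.
case: (classic (card_le P' d)) => [h|h]; [by left | right].
have := not_all_ex_not _ _ h; case=> s hs.
have us : uniq s by apply: NNPP => H; apply: hs => /H.
have sP : forall x, x \in s -> P' x by apply: NNPP => H; apply: hs => _ /H.
have ds : (d < size s)%N by rewrite ltnNge; apply/negP => H; apply: hs.
have hFq : forall x, x \in Fq -> is_const p x by move=> x hx; apply/Fq_def.
have [M M0 hM] := uniform_M hp hFq.
have fixM : forall x : K, is_const p x -> frob p M x = x by move=> x hx; have := hM x; apply; apply/Fq_def.
clear h hs.
case: d hd ds => [|d] hd ds.
  exists 1, (- phi`_0); split; first exact: oner_neq0.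
  have -> : phi = (phi`_0)%:P by apply: size1_polyC; rewrite -hd; case: (size phi).
  move=> /= i; rewrite comp_polyC comp_polyD comp_polyC comp_polyZ comp_polyX scale1r.
  rewrite coefC eqxx polyCN addrN coef0; exact: const0.
case: s us sP ds => [|x0 [|y0 s]] us sP ds //.
have xy : x0 != y0 by move: us => /= /andP [] /negP h0 _; apply/eqP => e; apply: h0; rewrite e mem_head.
have d0 : y0 - x0 != 0 by rewrite subr_eq0 eq_sym.
have Px0 : P x0 by apply: (proj1 (hb _ (sP _ (mem_head _ _)))).
have Py0 : P y0 by apply: (proj1 (hb _ (sP _ _))); rewrite inE mem_head orbT.
pose del := y0 - x0.
pose g z := (z - x0) / del.
have ginj : injective g by move=> z1 z2 e; move: (mulIf (invr_neq0 d0) e) => /eqP; rewrite subr_eq addrNK => /eqP.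
exists (del^-1), (- (x0 / del)); split; first by rewrite invr_eq0.
move=> eta etainv psi.
have etaE w : eta.[w] = g w by rewrite /eta !hornerE /g mulrBl mulrC.
have etainvE z : etainv.[g z] = z.
  rewrite /etainv !hornerE /g invrK opprK -mulrDl subrK mulrC divfK //.
set S := [:: x0, y0 & s].
pose ts := map g S.
have uts : uniq ts by rewrite map_inj_uniq.
have psiv z : z \in S -> is_const p (g z) /\ is_const p psi.[g z].
  move=> zS; have [Pz Pfz] := hb z (sP z zS).
  rewrite /psi !horner_comp etainvE etaE; split; exact: (ratio_const hp ha).
have size_eta : (size eta <= 2)%N.
  rewrite /eta (leq_trans (size_polyD _ _)) // geq_max (leq_trans (size_scale_leq _ _)) ?size_polyX //.
  by rewrite (leq_trans (size_polyC_leq1 _)).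
have size_etainv : (size etainv <= 2)%N.
  rewrite /etainv (leq_trans (size_scale_leq _ _)) // (leq_trans (size_polyD _ _)) // geq_max size_polyX.
  by rewrite size_polyN (leq_trans (size_polyC_leq1 _)).
have size_psi : (size psi <= d.+2)%N.
  have h1 : (size (phi \Po etainv) <= d.+2)%N.
    apply: (leq_trans (size_comp_poly_leq _ _)); rewrite hd.
    move: size_etainv; move: (size etainv) => k hk; nia.
  apply: (leq_trans (size_comp_poly_leq _ _)).
  move: h1 size_eta; move: (size eta) (size (phi \Po etainv)) => k l hl hk; nia.
set D := map_poly (frob p M) psi - psi.
have D0 : D = 0.
  apply/eqP; apply: contraTT ds => DN.
  have allr : all (root D) ts.
    apply/allP => t /mapP [z zS ->]; have [c1 c2] := psiv z zS.
    by rewrite /root /D hornerD hornerN -{1}(fixM _ c1) horner_map /= fixM // subrr.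
  have sD : (size D <= d.+2)%N.
    have sm : size (map_poly (frob p M) psi) = size psi by exact: size_map_poly.
    rewrite (leq_trans (size_polyD _ _)) // geq_max size_polyN sm.
    by rewrite size_psi.
  have := max_poly_roots DN allr uts; rewrite size_map -leqNgt => H.
  move: H sD; move: (size S) (size D) => a b; lia.
move=> i; have : D`_i = 0 by rewrite D0 coef0.
move/eqP; rewrite /D coefB coef_map /= subr_eq0 => /eqP e.
exact: (fix_const hp M0 e).
Qed.
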